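(* Let $\Gamma$ be a countable digraph such that (C1) ${\rm desc}(u)\cong\Gamma$ for all $u\in\Gamma$, and (C2) for every finitely generated descendant-closed subdigraph $X$ of $\Gamma$, the subgroup of ${\rm Aut}(X)$ of automorphisms extending to automorphisms of $\Gamma$ has countable index in ${\rm Aut}(X)$. Let $\mathcal C_\Gamma$ be the class of digraphs $A$ such that (D1) ${\rm desc}(a)\cong\Gamma$ for all $a\in A$, (D2) $A$ is finitely generated, and (D3) ${\rm desc}(a)\cap{\rm desc}(b)$ is finitely generated for all $a,b\in A$. Then for every $A\in\mathcal C_\Gamma$ there are only countably many isomorphism types of $\le$-embeddings $f:A\to B$ with $B\in\mathcal C_\Gamma$.
   Context: Subdigraphs are full induced subdigraphs. For a digraph, an $s$-arc ($s\ge0$) from $u_0$ to $u_s$ is a sequence $u_0\ldots u_s$ with each $(u_i,u_{i+1})$ a directed edge and $u_{i-1}\ne u_{i+1}$ for $0<i<s$; ${\rm desc}(u)$ is the set of vertices reachable from $u$ by an $s$-arc for some $s\ge0$ (as an induced subdigraph), and ${\rm desc}(Y)=\bigcup_{y\in Y}{\rm desc}(y)$. $A\le B$ (descendant-closed) means ${\rm desc}_B(a)\subseteq A$ for all $a\in A$; a descendant-closed set (or a digraph) is finitely generated if it equals ${\rm desc}(Z)$ for some finite set $Z$ of its vertices. A $\le$-embedding is an embedding $f:A\to B$ onto an induced subdigraph with $f(A)\le B$. Two $\le$-embeddings $f_1:A\to B_1$, $f_2:A\to B_2$ are isomorphic if there is an isomorphism $h:B_1\to B_2$ with $f_2=h\circ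 f_1$; isomorphism types are counted with respect to this relation, with $B$ varying over $\mathcal C_\Gamma$. *)

(* Defs.v *)
From Stdlib Require Import List.
Import ListNotations.

Record digraph : Type := Digraph {
  vert :> Type;
  edge : vert -> vert -> Prop;
  edge_irrefl : forall x, ~ edge x x;
  edge_asym : forall x y, edge x y -> ~ edge y x
}.
Arguments edge {d} _ _.

Definition induced (G : digraph) (P : G -> Prop) : digraph :=
  {| vert := {x : G | P x};
     edge := fun x y => edge (proj1_sig x) (proj1_sig y);
     edge_irrefl := fun x => edge_irrefl G (proj1_sig x);
     edge_asym := fun x y => edge_asym G (proj1_sig x) (proj1_sig y) |}.

Fixpoint is_arc (G : digraph) (l : list G) : Prop :=
  match l with
  | [] => False
  | [_] => True
  | x :: ((y :: rest) as tl) =>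
      edge x y /\ is_arc G tl /\
      match rest with [] => True | z :: _ => x <> z end
  end.

Definition desc (G : digraph) (u : G) (v : G) : Prop :=
  exists l : list G, is_arc G (u :: l) /\ last (u :: l) u = v.

Definition desc_list (G : digraph) (Y : list G) (v : G) : Prop :=
  exists y, In y Y /\ desc G y v.

Record iso (G H : digraph) : Type := Iso {
  fwd : G -> H;
  bwd : H -> G;
  bwd_fwd : forall x, bwd (fwd x) = x;
  fwd_bwd : forall y, fwd (bwd y) = y;
  fwd_edge : forall x y, edge x y <-> edge (fwd x) (fwd y)
}.
Arguments fwd {G H} _ _.
Arguments bwd {G H} _ _.

Definition isomorphic (G H : digraph) : Prop := inhabited (iso G H).

Definition countable_digraph (G : digraph) : Prop :=
  exists f : G -> nat, forall x y, f x = f y -> x = y.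

Definition desc_closed (G : digraph) (P : G -> Prop) : Prop :=
  forall a v, P a -> desc G a v -> P v.

Definition fin_gen_set (G : digraph) (P : G -> Prop) : Prop :=
  exists Z : list G, (forall z, In z Z -> P z) /\
                     (forall v, P v <-> desc_list G Z v).

Definition fin_gen (G : digraph) : Prop := fin_gen_set G (fun _ => True).

(* (C2) for a subset X: the subgroup of Aut(X) of automorphisms extending to
   automorphisms of G has countable index in Aut(X): there are countably
   many coset representatives r_n with every h in some r_n H. *)
Definition ext_countable_index (G : digraph) (X : G -> Prop) : Prop :=
  exists reps : nat -> iso (induced G X) (induced G X),
    forall h : iso (induced G X) (induced G X),
      exists n (g : iso G G),
        forall x : induced G X,
          proj1_sig (bwd (reps n) (fwd h x)) = fwd g (proj1_sig x).

Definition in_C (Gamma A : digraph) : Prop :=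
  (forall a : A, isomorphic (induced A (desc A a)) Gamma) /\
  fin_gen A /\
  (forall a b : A, fin_gen_set A (fun v => desc A a v /\ desc A b v)).

Definition le_embedding (A B : digraph) (f : A -> B) : Prop :=
  (forall x y, f x = f y -> x = y) /\
  (forall x y, edge x y <-> edge (f x) (f y)) /\
  desc_closed B (fun b => exists a, f a = b).

Definition iso_embeddings (A B1 B2 : digraph) (f1 : A -> B1) (f2 : A -> B2)
  : Prop :=
  exists h : iso B1 B2, forall a, f2 a = fwd h (f1 a).

(* Main.v *)
Require Import Defs.
From Stdlib Require Import List Relations Classical ClassicalEpsilon ProofIrrelevance Lia PeanoNat Cantor.
Import ListNotations.

Notation reach G := (clos_refl_trans_1n (vert G) (@edge G)).

Lemma last_indep {T} (y : T) l d d' : last (y :: l) d = last (y :: l) d'.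
Proof. revert y. induction l as [|z l IH]; intros y; simpl; auto.
  destruct l; auto. apply (IH z). Qed.

Lemma desc_reach G u v : desc G u v <-> reach G u v.
Proof.
  split.
  - intros [l [Ha Hl]]. revert u Ha Hl. induction l as [|w l IH]; intros u Ha Hl.
    + simpl in Hl. subst. constructor.
    + destruct Ha as [He [Ha _]]. econstructor. exact He. apply IH; auto.
      simpl in Hl. rewrite (last_indep w l w u). exact Hl.
  - induction 1 as [x|x y z Hxy Hyz IH].
    + exists []. simpl. auto.
    + destruct IH as [l [Ha Hl]]. exists (y :: l). split.
      * change (edge x y /\ is_arc G (y :: l) /\ match l with [] => True | z :: _ => x <> z end).
        split; [exact Hxy|]. split; [exact Ha|]. destruct l as [|w l']; auto.
        intro E. subst w. destruct Ha as [Hyw _]. exact (edge_asym _ _ _ Hxy Hyw).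
      * change (last (y :: l) x = z). rewrite (last_indep y l x y). exact Hl.
Qed.

Lemma reach_trans (G : digraph) (x y z : G) : reach G x y -> reach G y z -> reach G x z.
Proof. induction 1 as [|x x1 y He Hr IH]; intros; auto. econstructor 2; [exact He| auto]. Qed.

Lemma reach_edge (G : digraph) (x y : G) : edge x y -> reach G x y.
Proof. intros; econstructor; eauto; constructor. Qed.

Definition oc (G : digraph) (P : G -> Prop) := forall x y, P x -> edge x y -> P y.

Lemma oc_reach (G : digraph) P (x y : G) : oc G P -> P x -> reach G x y -> P y.
Proof. intros Ho Hx H; induction H; eauto. Qed.

Definition dlist (G : digraph) (Z : list G) (v : G) := exists z, In z Z /\ reach G z v.

Lemma desc_list_dlist G Z v : desc_list G Z v <-> dlist G Z v.
Proof. unfold desc_list, dlist. split; intros [z [H1 H2]]; exists z; split; auto;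
  apply desc_reach; auto. Qed.

Lemma oc_dlist G Z : oc G (dlist G Z).
Proof. intros x y [z [Hz Hr]] He. exists z; split; auto. eapply reach_trans; eauto.
  apply reach_edge; auto. Qed.

Lemma oc_reach1 (G : digraph) (u : G) : oc G (reach G u).
Proof. intros x y H He. eapply reach_trans; eauto. apply reach_edge; auto. Qed.

Lemma dlist_app G l1 l2 v : dlist G (l1 ++ l2) v <-> dlist G l1 v \/ dlist G l2 v.
Proof. unfold dlist. split.
  - intros [z [Hz Hr]]. apply in_app_or in Hz. destruct Hz; [left|right]; eauto.
  - intros [[z [Hz Hr]]|[z [Hz Hr]]]; exists z; split; auto; apply in_or_app; auto. Qed.

Lemma dlist_one G d v : dlist G [d] v <-> reach G d v.
Proof. unfold dlist. split. intros [z [[<-|[]] H]]; auto. intros; exists d; simpl; auto. Qed.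

Definition Inj (X Y : digraph) (R : X -> Y -> Prop) : Prop :=
  (forall x y y', R x y -> R x y' -> y = y') /\
  (forall x x' y, R x y -> R x' y -> x = x') /\
  (forall x x' y y', R x y -> R x' y' -> (edge x x' <-> edge y y')).
Definition dom {X Y : Type} (R : X -> Y -> Prop) x := exists y, R x y.
Definition ran {X Y : Type} (R : X -> Y -> Prop) y := exists x, R x y.
Definition rinv {X Y : Type} (R : X -> Y -> Prop) := fun y x => R x y.
Definition rcomp {X Y Z : Type} (R1 : X -> Y -> Prop) (R2 : Y -> Z -> Prop) :=
  fun x z => exists y, R1 x y /\ R2 y z.

Lemma Inj_inv (X Y : digraph) (R : X -> Y -> Prop) : Inj X Y R -> Inj Y X (rinv R).
Proof. unfold Inj, rinv. intros [H1 [H2 H3]]. split; [|split]; eauto.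
  intros; symmetry; eauto. Qed.

Lemma Inj_comp (X Y Z : digraph) (R1 : X -> Y -> Prop) (R2 : Y -> Z -> Prop) : Inj X Y R1 -> Inj Y Z R2 -> Inj X Z (rcomp R1 R2).
Proof. unfold Inj, rcomp. intros [a1 [b1 c1]] [a2 [b2 c2]]. split; [|split].
  - intros x y y' [u [Hu1 Hu2]] [u' [Hu1' Hu2']]. assert (u = u') by eauto. subst; eauto.
  - intros x x' y [u [Hu1 Hu2]] [u' [Hu1' Hu2']]. assert (u = u') by eauto. subst; eauto.
  - intros x x' y y' [u [Hu1 Hu2]] [u' [Hu1' Hu2']]. rewrite (c1 _ _ _ _ Hu1 Hu1'). eauto.
Qed.

Lemma Inj_restr (X Y : digraph) (R : X -> Y -> Prop) (P : X -> Prop) : Inj X Y R -> Inj X Y (fun x y => R x y /\ P x).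
Proof. unfold Inj. intros [a [b c]]. split; [|split].
  - intros x y y' [H1 _] [H2 _]; eauto.
  - intros x x' y [H1 _] [H2 _]; eauto.
  - intros x x' y y' [H1 _] [H2 _]; eauto. Qed.

Lemma Inj_transport (X Y : digraph) (R : X -> Y -> Prop) : Inj X Y R -> oc X (dom R) ->
  forall x y x', R x y -> reach X x x' -> exists y', R x' y' /\ reach Y y y'.
Proof. intros [a [b c]] Ho x y x' Hr H. revert y Hr. induction H as [x|x x1 x' He Hr' IH]; intros y Hr.
  - exists y; split; auto; constructor.
  - assert (Hd : dom R x1) by (apply (Ho x); [exists y; auto| auto]).
    destruct Hd as [y1 Hy1]. destruct (IH y1 Hy1) as [y' [H1 H2]]. exists y'; split; auto.
    econstructor; [|exact H2]. apply (c _ _ _ _ Hr Hy1); auto.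
Qed.

Lemma Inj_union (X Y : digraph) (T S : X -> Y -> Prop) :
  Inj X Y T -> Inj X Y S -> oc X (dom T) -> oc X (dom S) -> oc Y (ran T) -> oc Y (ran S) ->
  (forall x y, T x y -> (dom S x <-> ran S y)) ->
  (forall x y, S x y -> (dom T x <-> ran T y)) ->
  (forall x y, T x y -> dom S x -> S x y) ->
  Inj X Y (fun x y => T x y \/ S x y).
Proof.
  intros HT HS oT oS oT' oS' c1 c2 ag.
  assert (ag2 : forall x y, S x y -> dom T x -> T x y).
  { intros x y Hs [y' Hy']. assert (S x y') by (apply ag; auto; exists y; auto).
    destruct HS as [f _]. rewrite (f _ _ _ Hs H). auto. }
  destruct HT as [fT [iT eT]]. destruct HS as [fS [iS eS]].
  split; [|split].
  - intros x y y' [H|H] [H'|H']; eauto.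
    + apply (fS x); auto. apply ag; auto. exists y'; auto.
    + apply (fS x); auto. apply ag; auto. exists y; auto.
  - intros x x' y [H|H] [H'|H']; eauto.
    + apply (iS _ _ y); auto. apply ag; auto. apply (c1 _ _ H). exists x'; auto.
    + apply (iS _ _ y); auto. apply ag; auto. apply (c1 _ _ H'). exists x; auto.
  - assert (gen : forall x x' y y', T x y -> S x' y' -> (edge x x' <-> edge y y')).
    { intros x x' y y' Ht Hs. split; intro He.
      - assert (Hd : dom T x') by (apply (oT x); [exists y|]; auto).
        apply (eT x x' y y'); auto; apply ag2; auto.
      - assert (Hd : ran T y') by (apply (oT' y); [exists x|]; auto).
        assert (Hd' : dom T x') by (apply (c2 _ _ Hs); auto).
        apply (eT x x' y y'); auto; apply ag2; auto. }
    intros x x' y y' [H|H] [H'|H']; eauto.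
    split; intro He.
    + assert (Hd : dom S x') by (apply (oS x); [exists y|]; auto).
      apply (eS x x' y y'); auto; apply ag; auto.
    + assert (Hd : ran S y') by (apply (oS' y); [exists x|]; auto).
      assert (Hd' : dom S x') by (apply (c1 _ _ H'); auto).
      apply (eS x x' y y'); auto; apply ag; auto.

Qed.
Lemma sig_eq {T} {P : T -> Prop} (a b : sig P) : proj1_sig a = proj1_sig b -> a = b.
Proof. destruct a, b; simpl; intro; subst; f_equal; apply proof_irrelevance. Qed.

Lemma rel_of_iso (G B : digraph) (P : B -> Prop) (h : iso (induced B P) G) :
  Inj G B (fun g x => proj1_sig (bwd h g) = x) /\ (forall g, dom (fun g x => proj1_sig (bwd h g) = x) g)
  /\ (forall x, ran (fun g x => proj1_sig (bwd h g) = x) x <-> P x).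
Proof.
  split; [|split].
  - split; [|split].
    + intros; congruence.
    + intros g g' y H1 H2. rewrite <- (fwd_bwd _ _ h g), <- (fwd_bwd _ _ h g').
      f_equal. apply sig_eq. congruence.
    + intros g g' y y' H1 H2. subst.
      rewrite <- (fwd_bwd _ _ h g) at 1. rewrite <- (fwd_bwd _ _ h g') at 1.
      rewrite <- (fwd_edge _ _ h). simpl. tauto.
  - intros g. eexists; reflexivity.
  - intros x. split.
    + intros [g <-]. apply (proj2_sig (bwd h g)).
    + intros Hx. exists (fwd h (exist _ x Hx)). rewrite bwd_fwd. reflexivity.
Qed.

Definition iso_of_rel (X Y : digraph) (R : X -> Y -> Prop) (HR : Inj X Y R)
  (Hd : forall x, dom R x) (Hr : forall y, ran R y) : iso X Y.
Proof.
  refine {| fwd := fun x => proj1_sig (constructive_indefinite_description _ (Hd x));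
            bwd := fun y => proj1_sig (constructive_indefinite_description _ (Hr y)) |}.
  - intros x. destruct (constructive_indefinite_description _ (Hd x)) as [y Hy]; simpl.
    destruct (constructive_indefinite_description _ (Hr y)) as [x' Hx']; simpl.
    destruct HR as [_ [i _]]. eauto.
  - intros y. destruct (constructive_indefinite_description _ (Hr y)) as [x Hx]; simpl.
    destruct (constructive_indefinite_description _ (Hd x)) as [y' Hy']; simpl.
    destruct HR as [f _]. eauto.
  - intros x x'. destruct (constructive_indefinite_description _ (Hd x)) as [y Hy]; simpl.
    destruct (constructive_indefinite_description _ (Hd x')) as [y' Hy']; simpl.
    destruct HR as [_ [_ e]]. eauto.
Defined.

Lemma iso_of_rel_spec X Y R HR Hd Hr x : R x (fwd (iso_of_rel X Y R HR Hd Hr) x).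
Proof. simpl. destruct (constructive_indefinite_description _ (Hd x)); auto. Qed.

Lemma induced_iso_of_rel (G : digraph) (Y : G -> Prop) (R : G -> G -> Prop) :
  Inj G G R -> (forall x, Y x <-> dom R x) -> (forall y, Y y <-> ran R y) ->
  exists h : iso (induced G Y) (induced G Y), forall x, R (proj1_sig x) (proj1_sig (fwd h x)).
Proof.
  intros HR Hd Hr.
  set (R' := fun (x y : induced G Y) => R (proj1_sig x) (proj1_sig y)).
  assert (HR' : Inj _ _ R').
  { destruct HR as [f [i e]]. split; [|split]; unfold R'.
    - intros; apply sig_eq; eauto.
    - intros; apply sig_eq; eauto.
    - intros; simpl; eauto. }
  assert (Hd' : forall x, dom R' x).
  { intros [x Hx]. destruct (proj1 (Hd x) Hx) as [y Hy].
    assert (Yy : Y y) by (apply Hr; exists x; auto). exists (exist _ y Yy). exact Hy. }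
  assert (Hr' : forall y, ran R' y).
  { intros [y Hy]. destruct (proj1 (Hr y) Hy) as [x Hx].
    assert (Yx : Y x) by (apply Hd; exists y; auto). exists (exist _ x Yx). exact Hx. }
  exists (iso_of_rel _ _ R' HR' Hd' Hr'). intros x. apply (iso_of_rel_spec _ _ R').
Qed.
Definition iso_inv {G H : digraph} (h : iso G H) : iso H G.
Proof.
  refine {| fwd := bwd h; bwd := fwd h; bwd_fwd := fwd_bwd _ _ h; fwd_bwd := bwd_fwd _ _ h |}.
  intros x y. rewrite (fwd_edge _ _ h (bwd h x) (bwd h y)). rewrite !fwd_bwd. tauto.
Defined.

Definition iso_comp {G H K : digraph} (h : iso G H) (k : iso H K) : iso G K.
Proof.
  refine {| fwd := fun x => fwd k (fwd h x); bwd := fun z => bwd h (bwd k z) |}.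
  - intros x. rewrite !bwd_fwd. auto.
  - intros z. rewrite !fwd_bwd. auto.
  - intros x y. rewrite (fwd_edge _ _ h). apply (fwd_edge _ _ k).
Defined.

Lemma dlist_desc_closed (G : digraph) L : desc_closed G (dlist G L).
Proof. intros a v Ha Hd. apply desc_reach in Hd. eapply oc_reach; eauto. apply oc_dlist. Qed.

Lemma dlist_fin_gen (G : digraph) L : fin_gen_set G (dlist G L).
Proof. exists L. split.
  - intros z Hz. exists z; split; auto; constructor.
  - intros v. rewrite desc_list_dlist. tauto. Qed.

Lemma K_exists (Gamma : digraph)
  (C2 : forall X : Gamma -> Prop,
      desc_closed Gamma X -> fin_gen_set Gamma X ->
      ext_countable_index Gamma X)
  (X : digraph) (L : list Gamma) (W : X -> Prop) :
  exists K : nat -> (Gamma -> X -> Prop) -> Prop,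
   (forall psi, Inj Gamma X psi -> (forall g, dlist Gamma L g <-> dom psi g) ->
      (forall w, W w <-> ran psi w) -> exists m, K m psi) /\
   (forall m psi1 psi2, K m psi1 -> K m psi2 -> exists g : iso Gamma Gamma,
       (forall c, dlist Gamma L c -> dlist Gamma L (fwd g c)) /\
       (forall d, dlist Gamma L d -> exists c, dlist Gamma L c /\ fwd g c = d) /\
       (forall c w, dlist Gamma L c -> (psi1 c w <-> psi2 (fwd g c) w))).
Proof.
  set (Y := dlist Gamma L).
  destruct (classic (exists psi0, Inj Gamma X psi0 /\ (forall g, Y g <-> dom psi0 g) /\
      (forall w, W w <-> ran psi0 w))) as [[psi0 [I0 [D0 R0]]]|Hno].
  2:{ exists (fun _ _ => False). split; [|intros; contradiction].
      intros psi H1 H2 H3. exfalso. apply Hno. exists psi; auto. }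
  destruct (C2 Y (dlist_desc_closed _ _) (dlist_fin_gen _ _)) as [reps Hreps].
  set (Rep := fun m c d => exists x : induced Gamma Y, proj1_sig x = c /\ proj1_sig (fwd (reps m) x) = d).
  set (Kb := fun m psi (g : iso Gamma Gamma) => forall c, Y c -> forall w, psi c w <-> exists d, Rep m (fwd g c) d /\ psi0 d w).
  exists (fun m psi => Inj Gamma X psi /\ (forall g, Y g <-> dom psi g) /\
      (forall w, W w <-> ran psi w) /\ exists g, Kb m psi g).
  split.
  - intros psi I D R.
    set (rho := rcomp psi (rinv psi0)).
    assert (Irho : Inj _ _ rho) by (apply Inj_comp; auto; apply Inj_inv; auto).
    assert (Drho : forall c, Y c <-> dom rho c).
    { intros c. split.
      - intros Hc. destruct (proj1 (D c) Hc) as [w Hw].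
        destruct (proj1 (R0 w) (proj2 (R w) (ex_intro _ c Hw))) as [d Hd].
        exists d, w. split; auto.
      - intros [d [w [Hw _]]]. apply D. exists w; auto. }
    assert (Rrho : forall d, Y d <-> ran rho d).
    { intros d. split.
      - intros Hd. destruct (proj1 (D0 d) Hd) as [w Hw].
        destruct (proj1 (R w) (proj2 (R0 w) (ex_intro _ d Hw))) as [c Hc].
        exists c, w. split; auto.
      - intros [c [w [_ Hw]]]. apply D0. exists w; auto. }
    destruct (induced_iso_of_rel Gamma Y rho Irho Drho Rrho) as [h Hh].
    destruct (Hreps h) as [n [g Hg]].
    exists n. split; [auto|split; [auto|split; [auto|]]]. exists g.
    intros c Hc w.
    set (x := exist Y c Hc : induced Gamma Y).
    pose proof (Hh x) as Hx. destruct Hx as [w1 [Hw1 Hw1']]. simpl in Hw1.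
    pose proof (Hg x) as Hgx. simpl in Hgx.
    destruct I as [fI _]. destruct I0 as [fI0 [iI0 _]].
    split.
    + intros Hw. assert (w = w1) by eauto. subst w1.
      exists (proj1_sig (fwd h x)). split; auto.
      exists (bwd (reps n) (fwd h x)). split; auto. rewrite fwd_bwd. auto.
    + intros [d [[z [Hz1 Hz2]] Hd]].
      assert (Ez : z = bwd (reps n) (fwd h x)) by (apply sig_eq; congruence).
      subst z. rewrite fwd_bwd in Hz2. subst d.
      assert (w = w1) by eauto. subst. auto.
  -
    assert (Hmap : forall m psi g, Inj Gamma X psi -> (forall c, Y c <-> dom psi c) ->
       (forall w, W w <-> ran psi w) -> Kb m psi g ->
       (forall c, Y c -> Y (fwd g c)) /\ (forall d, Y d -> exists c, Y c /\ fwd g c = d)).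
    { intros m psi g I D R Kg. split.
      - intros c Hc. destruct (proj1 (D c) Hc) as [w Hw].
        destruct (proj1 (Kg c Hc w) Hw) as [d [[x [Hx _]] _]]. rewrite <- Hx. apply (proj2_sig x).
      - intros d Hd.
        set (d2 := proj1_sig (fwd (reps m) (exist Y d Hd))).
        assert (Yd2 : Y d2) by (apply (proj2_sig (fwd (reps m) (exist Y d Hd)))).
        destruct (proj1 (D0 d2) Yd2) as [w Hw].
        destruct (proj1 (R w) (proj2 (R0 w) (ex_intro _ d2 Hw))) as [c Hc].
        assert (Yc : Y c) by (apply D; exists w; auto).
        exists c. split; auto.
        destruct (proj1 (Kg c Yc w) Hc) as [d' [[x [Hx1 Hx2]] Hd']].
        destruct I0 as [_ [iI0 _]]. assert (d' = d2) by eauto. subst d'.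
        assert (E : fwd (reps m) x = fwd (reps m) (exist Y d Hd)) by (apply sig_eq; auto).
        apply (f_equal (bwd (reps m))) in E. rewrite !bwd_fwd in E. subst x. simpl in Hx1. auto. }
    intros m psi1 psi2 [I1 [D1 [R1 [g1 K1]]]] [I2 [D2 [R2 [g2 K2]]]].
    destruct (Hmap m psi1 g1 I1 D1 R1 K1) as [M1 O1].
    destruct (Hmap m psi2 g2 I2 D2 R2 K2) as [M2 O2].
    exists (iso_comp g1 (iso_inv g2)). simpl. split; [|split].
    + intros c Hc. destruct (O2 _ (M1 c Hc)) as [c' [Hc' E]]. rewrite <- E, bwd_fwd. auto.
    + intros d Hd. destruct (O1 _ (M2 d Hd)) as [c [Hc E]]. exists c. split; auto.
      rewrite E, bwd_fwd. auto.
    + intros c w Hc. destruct (O2 _ (M1 c Hc)) as [c' [Hc' E]]. rewrite <- E, bwd_fwd.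
      rewrite (K1 c Hc w), (K2 c' Hc' w), E. tauto.
Qed.
Lemma firstn_S_nth {T} (l : list T) j d : nth_error l j = Some d -> firstn (S j) l = firstn j l ++ [d].
Proof. revert l. induction j as [|j IH]; intros [|x l] H; simpl in *; try discriminate.
  - inversion H; auto.
  - rewrite (IH l H). auto. Qed.

Lemma firstn_S_none {T} (l : list T) j : nth_error l j = None -> firstn (S j) l = firstn j l.
Proof. intros H. apply nth_error_None in H. rewrite !firstn_all2; auto. Qed.

Lemma list_rel_exists {T U} (R : T -> U -> Prop) (N : list T) :
  (forall x, In x N -> exists y, R x y) ->
  exists M, (forall y, In y M -> exists x, In x N /\ R x y) /\ (forall x, In x N -> exists y, In y M /\ R x y).
Proof. induction N as [|x N IH]; intros H.
  - exists []. simpl; split; intros; contradiction.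
  - destruct (H x (or_introl eq_refl)) as [y Hy].
    destruct IH as [M [H1 H2]]. { intros; apply H; simpl; auto. }
    exists (y :: M). split.
    + intros y' [<-|Hy']; [exists x; simpl; auto|]. destruct (H1 _ Hy') as [x' [? ?]]; exists x'; simpl; auto.
    + intros x' [<-|Hx']; [exists y; simpl; auto|]. destruct (H2 _ Hx') as [y' [? ?]]; exists y'; simpl; auto.
Qed.

Fixpoint encl (l : list nat) : nat := match l with [] => 0 | x :: l => S (to_nat (x, encl l)) end.

Lemma to_nat_inj p q : to_nat p = to_nat q -> p = q.
Proof. intros H. rewrite <- (cancel_of_to p), <- (cancel_of_to q), H. auto. Qed.

Lemma encl_inj l1 l2 : encl l1 = encl l2 -> l1 = l2.
Proof. revert l2; induction l1 as [|x l1 IH]; intros [|y l2] H; try discriminate; auto.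
  change (S (to_nat (x, encl l1)) = S (to_nat (y, encl l2))) in H.
  apply eq_add_S in H. apply to_nat_inj in H. injection H as -> H. f_equal; auto. Qed.

Lemma map_inj' {T} (f : T -> nat) (Hf : forall x y, f x = f y -> x = y) l1 l2 : map f l1 = map f l2 -> l1 = l2.
Proof. revert l2; induction l1 as [|x l1 IH]; intros [|y l2] H; simpl in *; try discriminate; auto.
  injection H as H1 H2. f_equal; auto. Qed.

Lemma oc_ext (G : digraph) (P Q : G -> Prop) : (forall x, P x <-> Q x) -> oc G P -> oc G Q.
Proof. intros E H x y Hx He. apply E. apply (H x y); auto. apply E; auto. Qed.

Lemma Inj_fun (G : digraph) (g : iso G G) : Inj G G (fun a b => fwd g a = b).
Proof. split; [|split].
  - intros; congruence.
  - intros x x' y H1 H2. rewrite <- (bwd_fwd _ _ g x), <- (bwd_fwd _ _ g x'). congruence.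
  - intros; subst. apply fwd_edge. Qed.

Section Main.
Variable Gamma : digraph.
Variable cG : Gamma -> nat.
Hypothesis cG_inj : forall x y, cG x = cG y -> x = y.
Hypothesis C2 : forall X : Gamma -> Prop,
      desc_closed Gamma X -> fin_gen_set Gamma X -> ext_countable_index Gamma X.
Variable A : digraph.
Hypothesis HA : in_C Gamma A.

Definition Struct := {B : digraph & ((A -> B) * list B)%type}.
Definition SB (s : Struct) : digraph := projT1 s.
Definition Sf (s : Struct) : A -> SB s := fst (projT2 s).
Definition SZ (s : Struct) : list (SB s) := snd (projT2 s).

Definition Good (s : Struct) := in_C Gamma (SB s) /\ le_embedding A (SB s) (Sf s) /\
   forall v, dlist (SB s) (SZ s) v.
Definition Pj (s : Struct) (j : nat) (x : SB s) :=
  (exists a, Sf s a = x) \/ dlist (SB s) (firstn j (SZ s)) x.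
Definition Rel (s1 s2 : Struct) j (R : SB s1 -> SB s2 -> Prop) :=
  Inj _ _ R /\ (forall x, Pj s1 j x <-> dom R x) /\ (forall y, Pj s2 j y <-> ran R y) /\
  (forall a, R (Sf s1 a) (Sf s2 a)) /\ length (SZ s1) = length (SZ s2).

Lemma oc_im (B : digraph) (f : A -> B) : le_embedding A B f -> oc B (fun x => exists a, f a = x).
Proof. intros [_ [_ H]] x y Hx He. apply (H x y Hx). apply desc_reach. apply reach_edge; auto. Qed.

Lemma oc_Pj s j : Good s -> oc _ (Pj s j).
Proof. intros [_ [He _]] x y [Hx|Hx] Hxy; [left|right].
  - apply (oc_im _ _ He x y); auto.
  - apply (oc_dlist _ _ x y); auto. Qed.

Lemma Pj_S_none s j : nth_error (SZ s) j = None -> forall x, Pj s (S j) x <-> Pj s j x.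
Proof. intros H x. unfold Pj. rewrite firstn_S_none; tauto. Qed.

Lemma Pj_S_some s j d : nth_error (SZ s) j = Some d -> forall x, Pj s (S j) x <-> Pj s j x \/ reach _ d x.
Proof. intros H x. unfold Pj. rewrite (firstn_S_nth _ _ _ H), dlist_app, dlist_one. tauto. Qed.

Lemma Rel_comp s1 s2 s3 j R1 R2 : Rel s1 s3 j R1 -> Rel s2 s3 j R2 -> Rel s1 s2 j (rcomp R1 (rinv R2)).
Proof.
  intros [I1 [D1 [Ra1 [F1 L1]]]] [I2 [D2 [Ra2 [F2 L2]]]]. split; [|split; [|split; [|split]]].
  - apply Inj_comp; auto. apply Inj_inv; auto.
  - intros x. rewrite D1. split.
    + intros [w Hw]. assert (Hw2 : ran R2 w) by (apply Ra2, Ra1; exists x; auto).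
      destruct Hw2 as [y Hy]. exists y, w; split; auto.
    + intros [y [w [H _]]]. exists w; auto.
  - intros y. rewrite D2. split.
    + intros [w Hw]. assert (Hw1 : ran R1 w) by (apply Ra1, Ra2; exists y; auto).
      destruct Hw1 as [x Hx]. exists x, w; split; auto.
    + intros [x [w [_ H]]]. exists w; auto.
  - intros a. exists (Sf s3 a); split; auto. apply F2.
  - congruence.
Qed.

Lemma reach_push (B : digraph) (f : A -> B) : le_embedding A B f ->
  forall a a', reach A a a' -> reach B (f a) (f a').
Proof. intros [_ [Hed _]] a a' H. induction H; [constructor|].
  econstructor 2; [apply Hed; eauto| auto]. Qed.

Lemma im_dlist (B : digraph) (f : A -> B) : le_embedding A B f ->
  exists U, forall v, (exists a, f a = v) <-> dlist B U v.
Proof.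
  intros He. destruct HA as [_ [[ZA [_ HZA]] _]]. exists (map f ZA). intros v. split.
  - intros [a <-]. destruct (proj1 (HZA a) I) as [z [Hz Hd]]. apply desc_reach in Hd.
    exists (f z). split; [apply in_map; auto|]. apply reach_push; auto.
  - intros [w [Hw Hr]]. apply in_map_iff in Hw. destruct Hw as [z [<- _]].
    apply (oc_reach _ (fun x => exists a, f a = x) (f z)); auto. apply oc_im; auto. exists z; auto.
Qed.

Lemma Pj_dlist s j : Good s -> exists U, forall v, Pj s j v <-> dlist _ U v.
Proof. intros [_ [He _]]. destruct (im_dlist _ _ He) as [U HU].
  exists (U ++ firstn j (SZ s)). intros v. rewrite dlist_app, <- HU. unfold Pj. tauto. Qed.

Lemma inter_fin (B : digraph) : in_C Gamma B -> forall (d : B) U,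
  exists N, forall v, (dlist B U v /\ reach B d v) <-> dlist B N v.
Proof.
  intros [_ [_ H3]] d U. induction U as [|u U IH].
  - exists []. intros v. unfold dlist; simpl. split; [intros [[z [[] _]] _]|intros [z [[] _]]].
  - destruct IH as [N HN]. destruct (H3 u d) as [N1 [_ HN1]].
    exists (N1 ++ N). intros v. rewrite dlist_app, <- HN.
    specialize (HN1 v). rewrite desc_list_dlist, !desc_reach in HN1. rewrite <- HN1.
    change (u :: U) with ([u] ++ U). rewrite dlist_app, dlist_one. tauto.
Qed.

Lemma Pj_inter s j d : Good s -> exists N, forall v, (Pj s j v /\ reach _ d v) <-> dlist _ N v.
Proof. intros Hg. destruct (Pj_dlist s j Hg) as [U HU]. destruct Hg as [Hc _].
  destruct (inter_fin _ Hc d U) as [N HN]. exists N. intros v. rewrite HU; auto. Qed.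

Lemma countable_good (B : digraph) (Z : list B) : in_C Gamma B -> (forall v, dlist B Z v) ->
  exists c : B -> nat, forall x y, c x = c y -> x = y.
Proof.
  intros [H1 _] HZ.
  assert (hz : forall z : B, {h : iso (induced B (desc B z)) Gamma | True}).
  { intros z. apply constructive_indefinite_description. destruct (H1 z) as [h]. exists h; auto. }
  assert (pick : forall x : B, {i : nat & {z : B | nth_error Z i = Some z /\ desc B z x}}).
  { intros x. destruct (constructive_indefinite_description _ (HZ x)) as [z [Hz Hr]].
    destruct (constructive_indefinite_description _ (In_nth_error _ _ Hz)) as [i Hi].
    exists i, z. split; auto. apply desc_reach; auto. }
  exists (fun x => let (i, p) := pick x in let (z, H) := p in
           to_nat (i, cG (fwd (proj1_sig (hz z)) (exist _ x (proj2 H))))).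
  intros x y. destruct (pick x) as [i [z [E H]]]. destruct (pick y) as [i' [z' [E' H']]].
  intros Hc. apply to_nat_inj in Hc. injection Hc as -> Hc. assert (Ez : z' = z) by congruence. subst z'.
  apply cG_inj in Hc. apply (f_equal (bwd (proj1_sig (hz z)))) in Hc. rewrite !bwd_fwd in Hc.
  apply (f_equal (@proj1_sig _ _)) in Hc. exact Hc.
Qed.

Definition Count j := exists S : nat -> Struct, (forall n, Good (S n)) /\
  forall s, Good s -> exists n R, Rel s (S n) j R.

Lemma good_default : exists s, Good s.
Proof. destruct HA as [H1 [[ZA [_ HZA]] H3]].
  exists (existT _ A ((fun a : A => a), ZA)). split; [exact HA|split].
  - split; [|split]; simpl; auto. tauto. intros a v [a' <-] _. exists v; auto.
  - intros v. apply desc_list_dlist. apply HZA. auto.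
Qed.

Lemma rep_from_real (Real : nat -> Struct -> Prop) :
  exists S : nat -> Struct, forall c, Good (S c) /\ ((exists s, Good s /\ Real c s) -> Real c (S c)).
Proof.
  destruct good_default as [s0 G0].
  exists (fun c => match excluded_middle_informative (exists s, Good s /\ Real c s) with
          | left h => proj1_sig (constructive_indefinite_description _ h) | right _ => s0 end).
  intros c. destruct (excluded_middle_informative _) as [h|h].
  - destruct (constructive_indefinite_description _ h) as [s [Gs Rs]]; simpl. auto.
  - split; auto. intros; contradiction.
Qed.

Lemma Rel_ext s1 s2 j k R : Rel s1 s2 j R -> (forall x, Pj s1 k x <-> Pj s1 j x) ->
  (forall y, Pj s2 k y <-> Pj s2 j y) -> Rel s1 s2 k R.
Proof. intros [I [D [Ra [F L]]]] E1 E2. split; [|split; [|split; [|split]]]; auto.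
  - intros x. rewrite E1; auto.
  - intros y. rewrite E2; auto. Qed.

Lemma count0 : Count 0.
Proof.
  destruct (rep_from_real (fun c s => length (SZ s) = c)) as [S HS].
  exists S. split; [intros n; apply HS|].
  intros s Gs. exists (length (SZ s)).
  destruct (HS (length (SZ s))) as [GS RS].
  specialize (RS (ex_intro _ s (conj Gs eq_refl))).
  exists (fun x y => exists a, Sf s a = x /\ Sf (S (length (SZ s))) a = y).
  destruct Gs as [_ [[i1 [e1 _]] _]]. destruct GS as [_ [[i2 [e2 _]] _]].
  split; [|split; [|split; [|split]]].
  - split; [|split].
    + intros x y y' [a [<- <-]] [a' [Ea <-]]. rewrite (i1 _ _ Ea). auto.
    + intros x x' y [a [<- <-]] [a' [<- Ea]]. rewrite (i2 _ _ Ea). auto.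
    + intros x x' y y' [a [<- <-]] [a' [<- <-]]. rewrite <- e1, <- e2. tauto.
  - intros x. unfold Pj, dom. simpl. split.
    + intros [[a <-]|[z [[] _]]]. exists (Sf (S (length (SZ s))) a), a; auto.
    + intros [y [a [<- _]]]. left; exists a; auto.
  - intros y. unfold Pj, ran. simpl. split.
    + intros [[a <-]|[z [[] _]]]. exists (Sf s a), a; auto.
    + intros [x [a [_ <-]]]. left; exists a; auto.
  - intros a; exists a; auto.
  - auto.
Qed.

Definition code n a b t := to_nat (n, to_nat (a, to_nat (b, t))).

Lemma code_inj n a b t n' a' b' t' : code n a b t = code n' a' b' t' -> n = n' /\ a = a' /\ b = b' /\ t = t'.
Proof. unfold code. intros H. apply to_nat_inj in H.
  pose proof (f_equal fst H) as E1; pose proof (f_equal snd H) as E2; cbn [fst snd] in E1, E2.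
  apply to_nat_inj in E2.
  pose proof (f_equal fst E2) as E3; pose proof (f_equal snd E2) as E4; cbn [fst snd] in E3, E4.
  apply to_nat_inj in E4.
  pose proof (f_equal fst E4) as E5; pose proof (f_equal snd E4) as E6; cbn [fst snd] in E5, E6.
  auto. Qed.

Section Step.
Variable j : nat.
Variable SS : nat -> Struct.
Hypothesis GS : forall n, Good (SS n).
Variable cB : forall n, SB (SS n) -> nat.
Hypothesis cB_inj : forall n x y, cB n x = cB n y -> x = y.
Variable Kf : forall n, list Gamma -> list (SB (SS n)) -> nat -> (Gamma -> SB (SS n) -> Prop) -> Prop.
Hypothesis Kf_a : forall n L M psi, Inj _ _ psi -> (forall g, dlist Gamma L g <-> dom psi g) ->
      (forall w, dlist _ M w <-> ran psi w) -> exists m, Kf n L M m psi.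
Hypothesis Kf_b : forall n L M m psi1 psi2, Kf n L M m psi1 -> Kf n L M m psi2 -> exists g : iso Gamma Gamma,
       (forall c, dlist Gamma L c -> dlist Gamma L (fwd g c)) /\
       (forall d, dlist Gamma L d -> exists c, dlist Gamma L c /\ fwd g c = d) /\
       (forall c w, dlist Gamma L c -> (psi1 c w <-> psi2 (fwd g c) w)).

Definition Real c s := exists n R, Rel s (SS n) j R /\
  ((nth_error (SZ s) j = None /\ c = code n 0 0 0) \/
   (exists d (Phi : Gamma -> SB s -> Prop) L M m, nth_error (SZ s) j = Some d /\
      Inj _ _ Phi /\ (forall g, dom Phi g) /\ (forall x, ran Phi x <-> reach _ d x) /\
      (forall g, dlist Gamma L g <-> exists x, Phi g x /\ Pj s j x) /\
      Kf n L M m (rcomp Phi R) /\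
      c = code n (encl (map cG L)) (encl (map (cB n) M)) (S m))).

Lemma real_exists s n R : Good s -> Rel s (SS n) j R -> exists c, Real c s.
Proof.
  intros Gs HR. destruct (nth_error (SZ s) j) as [d|] eqn:E.
  2:{ exists (code n 0 0 0), n, R. split; auto. }
  pose proof Gs as [[H1 [H2 H3]] [He HZ]].
  destruct (H1 d) as [h].
  destruct (rel_of_iso Gamma (SB s) (desc _ d) h) as [IPhi [DPhi RPhi0]].
  set (Phi := fun g x => proj1_sig (bwd h g) = x) in *.
  assert (RPhi : forall x, ran Phi x <-> reach _ d x) by (intros x; rewrite RPhi0; apply desc_reach).
  clear RPhi0.
  destruct HR as [IR [DR [RR [FR LR]]]].
  destruct (Pj_inter s j d Gs) as [N HN].
  destruct (list_rel_exists (rinv Phi) N) as [L [HL1 HL2]].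
  { intros x Hx. apply RPhi. apply HN. exists x; split; auto; constructor. }
  assert (ocdPhi : oc _ (dom Phi)) by (intros x y _ _; apply DPhi).
  assert (ocrPhi : oc _ (dom (rinv Phi))).
  { apply (oc_ext _ (reach _ d)); [|apply oc_reach1]. intros x; rewrite <- RPhi; tauto. }
  assert (HY : forall g, dlist Gamma L g <-> exists x, Phi g x /\ Pj s j x).
  { intros g. split.
    - intros [l [Hl Hr]]. destruct (HL1 l Hl) as [x0 [Hx0 Hlx0]].
      destruct (Inj_transport _ _ Phi IPhi ocdPhi l x0 g Hlx0 Hr) as [x [Hx Hr']].
      exists x. split; auto.
      assert (Hx0' : Pj s j x0 /\ reach _ d x0) by (apply HN; exists x0; split; auto; constructor).
      apply (oc_reach _ _ x0); [apply oc_Pj; auto| tauto| auto].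
    - intros [x [Hx Px]]. assert (Hd : reach _ d x) by (apply RPhi; exists g; auto).
      destruct (proj1 (HN x) (conj Px Hd)) as [z [Hz Hzx]].
      destruct (HL2 z Hz) as [g0 [Hg0 Hg0z]].
      destruct (Inj_transport _ _ (rinv Phi) (Inj_inv _ _ _ IPhi) ocrPhi z g0 x Hg0z Hzx) as [g' [Hg' Hr']].
      destruct IPhi as [_ [iP _]]. assert (g' = g) by (apply (iP _ _ x); auto). subst g'.
      exists g0; split; auto. }
  set (psi := rcomp Phi R).
  assert (Ipsi : Inj _ _ psi) by (apply Inj_comp; auto).
  assert (Dpsi : forall g, dlist Gamma L g <-> dom psi g).
  { intros g. rewrite HY. split.
    - intros [x [Hx Px]]. destruct (proj1 (DR x) Px) as [w Hw]. exists w, x; auto.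
    - intros [w [x [Hx Hw]]]. exists x; split; auto. apply DR; exists w; auto. }
  destruct (list_rel_exists psi L) as [M [HM1 HM2]].
  { intros l Hl. apply Dpsi. exists l; split; auto; constructor. }
  assert (ocdpsi : oc _ (dom psi)) by (apply (oc_ext _ (dlist Gamma L)); [apply Dpsi|apply oc_dlist]).
  assert (ocrpsi : oc _ (ran psi)).
  { intros w w' [g [x [Hx Hxw]]] Hee.
    assert (Pw' : Pj (SS n) j w') by (apply (oc_Pj _ j (GS n) w); auto; apply RR; exists x; auto).
    destruct (proj1 (RR w') Pw') as [x' Hx'].
    assert (Exx : edge x x') by (destruct IR as [_ [_ eR]]; apply (eR _ _ _ _ Hxw Hx'); auto).
    assert (Rd : reach _ d x') by (apply (oc_reach1 _ d x); auto; apply RPhi; exists g; auto).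
    destruct (proj2 (RPhi x') Rd) as [g' Hg']. exists g', x'; auto. }
  assert (Rpsi : forall w, dlist _ M w <-> ran psi w).
  { intros w. split.
    - intros [wl [Hwl Hr]]. destruct (HM1 wl Hwl) as [l [Hl Hlw]].
      destruct (Inj_transport _ _ (rinv psi) (Inj_inv _ _ _ Ipsi) ocrpsi wl l w Hlw Hr) as [g [Hg _]].
      exists g; auto.
    - intros [g Hg]. assert (Hgl : dlist Gamma L g) by (apply Dpsi; exists w; auto).
      destruct Hgl as [l [Hl Hr]]. destruct (HM2 l Hl) as [wl [Hwl Hlw]].
      destruct (Inj_transport _ _ psi Ipsi ocdpsi l wl g Hlw Hr) as [w' [Hw' Hr']].
      destruct Ipsi as [fp _]. assert (w' = w) by eauto. subst w'.
      exists wl; auto. }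
  destruct (Kf_a n L M psi Ipsi Dpsi Rpsi) as [m Hm].
  exists (code n (encl (map cG L)) (encl (map (cB n) M)) (S m)), n, R.
  split; [split; auto|].
  right. exists d, Phi, L, M, m.
  exact (conj E (conj IPhi (conj DPhi (conj RPhi (conj HY (conj Hm eq_refl)))))).
Qed.
Lemma real_rel c s1 s2 : Good s1 -> Good s2 -> Real c s1 -> Real c s2 -> exists U, Rel s1 s2 (S j) U.
Proof.
  intros G1 G2 [n1 [R1 [HR1 Hc1]]] [n2 [R2 [HR2 Hc2]]].
  destruct Hc1 as [[E1 Hc1]|[d1 [Phi1 [L1 [M1 [m1 [E1 [IPhi1 [DPhi1 [RPhi1 [HY1 [HK1 Hc1]]]]]]]]]]]];
  destruct Hc2 as [[E2 Hc2]|[d2 [Phi2 [L2 [M2 [m2 [E2 [IPhi2 [DPhi2 [RPhi2 [HY2 [HK2 Hc2]]]]]]]]]]]];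
  rewrite Hc1 in Hc2; apply code_inj in Hc2; destruct Hc2 as [En [Ea [Eb Et]]]; subst n2;
    try discriminate.
  - exists (rcomp R1 (rinv R2)). apply (Rel_ext _ _ j); [apply (Rel_comp _ _ (SS n1)); auto| |];
      apply Pj_S_none; auto.
  - apply encl_inj, (map_inj' _ cG_inj) in Ea. apply encl_inj, (map_inj' _ (cB_inj n1)) in Eb.
    injection Et as Et. subst L2 M2 m2. rename n1 into n, L1 into L, M1 into M, m1 into m.
    destruct (Kf_b n L M m _ _ HK1 HK2) as [g [Gin [Gon Gpsi]]].
    pose proof (Rel_comp _ _ _ _ _ _ HR1 HR2) as HT.
    set (T := rcomp R1 (rinv R2)) in *.
    destruct HR1 as [IR1 [DR1 [RR1 _]]]. destruct HR2 as [IR2 [DR2 [RR2 _]]].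
    destruct HT as [IT [DT [RT [FT LT]]]].
    set (Sg := rcomp (rinv Phi1) (rcomp (fun a b => fwd g a = b) Phi2)).
    assert (ISg : Inj _ _ Sg).
    { apply Inj_comp; [apply Inj_inv; auto|]. apply Inj_comp; auto. apply Inj_fun. }
    assert (DSg : forall x, dom Sg x <-> reach _ d1 x).
    { intros x. split.
      - intros [y [gm [H _]]]. apply RPhi1. exists gm; auto.
      - intros Hx. destruct (proj2 (RPhi1 x) Hx) as [gm Hgm]. destruct (DPhi2 (fwd g gm)) as [y Hy].
        exists y, gm. split; auto. exists (fwd g gm); auto. }
    assert (RSg : forall y, ran Sg y <-> reach _ d2 y).
    { intros y. split.
      - intros [x [gm [_ [dl [_ H]]]]]. apply RPhi2. exists dl; auto.
      - intros Hy. destruct (proj2 (RPhi2 y) Hy) as [dl Hdl]. destruct (DPhi1 (bwd g dl)) as [x Hx].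
        exists x, (bwd g dl). split; auto. exists dl; split; auto. apply fwd_bwd. }
    destruct IR1 as [fR1 [iR1 _]]. destruct IR2 as [fR2 [iR2 _]].
    pose proof IPhi1 as [fP1 [iP1 _]]. pose proof IPhi2 as [fP2 [iP2 _]].
    assert (c1 : forall x y, T x y -> (dom Sg x <-> ran Sg y)).
    { intros x y [w [H1 H2]]. rewrite DSg, RSg. split.
      - intros Hx. destruct (proj2 (RPhi1 x) Hx) as [gm Hgm].
        assert (Yg : dlist Gamma L gm) by (apply HY1; exists x; split; auto; apply DR1; exists w; auto).
        destruct (proj1 (Gpsi gm w Yg) (ex_intro _ x (conj Hgm H1))) as [y' [Hy'1 Hy'2]].
        assert (y' = y) by eauto. subst y'. apply RPhi2. exists (fwd g gm); auto.
      - intros Hy. destruct (proj2 (RPhi2 y) Hy) as [dl Hdl].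
        assert (Yd : dlist Gamma L dl) by (apply HY2; exists y; split; auto; apply DR2; exists w; auto).
        destruct (Gon dl Yd) as [gm [Yg Eg]].
        assert (Hp2 : rcomp Phi2 R2 (fwd g gm) w) by (rewrite Eg; exists y; auto).
        destruct (proj2 (Gpsi gm w Yg) Hp2) as [x' [Hx'1 Hx'2]].
        assert (x' = x) by eauto. subst x'. apply RPhi1. exists gm; auto. }
    assert (c2 : forall x y, Sg x y -> (dom T x <-> ran T y)).
    { intros x y [gm [Hgx [dl [Edl Hdy]]]]. subst dl. rewrite <- DT, <- RT. split.
      - intros Px. assert (Yg : dlist Gamma L gm) by (apply HY1; exists x; auto).
        destruct (proj1 (DR1 x) Px) as [w Hw].
        destruct (proj1 (Gpsi gm w Yg) (ex_intro _ x (conj Hgx Hw))) as [y' [Hy'1 Hy'2]].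
        assert (y' = y) by eauto. subst y'. apply DR2. exists w; auto.
      - intros Py. assert (Yd : dlist Gamma L (fwd g gm)) by (apply HY2; exists y; auto).
        destruct (Gon _ Yd) as [gm' [Yg' Eg']].
        assert (gm' = gm) by (rewrite <- (bwd_fwd _ _ g gm'), <- (bwd_fwd _ _ g gm); congruence).
        subst gm'. destruct (proj1 (HY1 gm) Yg') as [x' [Hx' Px']].
        assert (x' = x) by eauto. subst; auto. }
    assert (ag : forall x y, T x y -> dom Sg x -> Sg x y).
    { intros x y [w [H1 H2]] Hdx. apply DSg in Hdx.
      destruct (proj2 (RPhi1 x) Hdx) as [gm Hgm].
      assert (Yg : dlist Gamma L gm) by (apply HY1; exists x; split; auto; apply DR1; exists w; auto).
      destruct (proj1 (Gpsi gm w Yg) (ex_intro _ x (conj Hgm H1))) as [y' [Hy'1 Hy'2]].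
      assert (y' = y) by eauto. subst y'. exists gm; split; auto. exists (fwd g gm); auto. }
    assert (oT : oc _ (dom T)) by (apply (oc_ext _ (Pj s1 j)); [apply DT|apply oc_Pj; auto]).
    assert (oT' : oc _ (ran T)) by (apply (oc_ext _ (Pj s2 j)); [apply RT|apply oc_Pj; auto]).
    assert (oS : oc _ (dom Sg)) by (apply (oc_ext _ (reach _ d1)); [intros; rewrite DSg; tauto|apply oc_reach1]).
    assert (oS' : oc _ (ran Sg)) by (apply (oc_ext _ (reach _ d2)); [intros; rewrite RSg; tauto|apply oc_reach1]).
    exists (fun x y => T x y \/ Sg x y).
    split; [|split; [|split; [|split]]].
    + apply Inj_union; auto.
    + intros x. rewrite (Pj_S_some _ _ _ E1), DT, <- DSg. unfold dom. split.
      * intros [[y Hy]|[y Hy]]; exists y; auto.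
      * intros [y [Hy|Hy]]; [left|right]; exists y; auto.
    + intros y. rewrite (Pj_S_some _ _ _ E2), RT, <- RSg. unfold ran. split.
      * intros [[x Hx]|[x Hx]]; exists x; auto.
      * intros [x [Hx|Hx]]; [left|right]; exists x; auto.
    + intros a. left. apply FT.
    + auto.
Qed.

End Step.
Lemma count_step j : Count j -> Count (S j).
Proof.
  intros [SS [GS HS]].
  assert (XB : forall n, {c : SB (SS n) -> nat | forall x y, c x = c y -> x = y}).
  { intros n. apply constructive_indefinite_description.
    destruct (GS n) as [H1 [_ H3]]. eapply countable_good; eauto. }
  assert (XK : forall n L (M : list (SB (SS n))), {K : nat -> (Gamma -> SB (SS n) -> Prop) -> Prop |
     (forall psi, Inj Gamma _ psi -> (forall g, dlist Gamma L g <-> dom psi g) ->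
      (forall w, dlist _ M w <-> ran psi w) -> exists m, K m psi) /\
     (forall m psi1 psi2, K m psi1 -> K m psi2 -> exists g : iso Gamma Gamma,
       (forall c, dlist Gamma L c -> dlist Gamma L (fwd g c)) /\
       (forall d, dlist Gamma L d -> exists c, dlist Gamma L c /\ fwd g c = d) /\
       (forall c w, dlist Gamma L c -> (psi1 c w <-> psi2 (fwd g c) w)))}).
  { intros n L M. apply constructive_indefinite_description. apply K_exists; auto. }
  set (cB := fun n => proj1_sig (XB n)).
  set (Kf := fun n L M => proj1_sig (XK n L M)).
  assert (cB_inj : forall n x y, cB n x = cB n y -> x = y) by (intros n; apply (proj2_sig (XB n))).
  assert (Kf_a := fun n L M => proj1 (proj2_sig (XK n L M))).
  assert (Kf_b := fun n L M => proj2 (proj2_sig (XK n L M))).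
  destruct (rep_from_real (Real j SS cB Kf)) as [S' HS'].
  exists S'. split; [intros c; apply HS'|].
  intros s Gs. destruct (HS s Gs) as [n [R HR]].
  destruct (real_exists j SS GS cB Kf Kf_a s n R Gs HR) as [c Hc].
  destruct (HS' c) as [G' R']. specialize (R' (ex_intro _ s (conj Gs Hc))).
  exists c. eapply real_rel; eauto.
  intros n0 L M m psi1 psi2 K1 K2. exact (Kf_b n0 L M m psi1 psi2 K1 K2).
Qed.

Lemma all_count j : Count j.
Proof. induction j; [apply count0|apply count_step; auto]. Qed.

Lemma main_sec : exists S : nat -> {B : digraph & A -> B},
    forall (B : digraph) (f : A -> B),
      in_C Gamma B -> le_embedding A B f ->
      exists n, iso_embeddings A (projT1 (S n)) B (projT2 (S n)) f.
Proof.
  assert (F : forall j, {S : nat -> Struct | (forall n, Good (S n)) /\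
      forall s, Good s -> exists n R, Rel s (S n) j R}).
  { intros j. apply constructive_indefinite_description. apply all_count. }
  exists (fun k => let t := proj1_sig (F (fst (of_nat k))) (snd (of_nat k)) in existT _ (SB t) (Sf t)).
  intros B f HB Hf.
  pose proof HB as [_ [[Z [_ HZ]] _]].
  set (s := existT (fun B : digraph => ((A -> B) * list B)%type) B (f, Z) : Struct).
  assert (Gs : Good s).
  { split; [auto|split; [auto|]]. intros v. apply desc_list_dlist. apply HZ. auto. }
  destruct (proj2 (proj2_sig (F (length Z))) s Gs) as [n [R HR]].
  exists (to_nat (length Z, n)). rewrite cancel_of_to. simpl.
  set (t := proj1_sig (F (length Z)) n) in *.
  destruct HR as [IR [DR [RR [FR LR]]]].
  assert (Pall : forall x, Pj s (length Z) x).
  { intros x. right. unfold s, SZ; simpl. rewrite firstn_all. apply desc_list_dlist, HZ; auto. }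
  assert (Gt : Good t) by apply (proj2_sig (F (length Z))).
  assert (Pall' : forall y, Pj t (length Z) y).
  { intros y. right. rewrite firstn_all2.
    - destruct Gt as [_ [_ H]]; auto.
    - rewrite <- LR. unfold s, SZ; simpl. auto. }
  assert (It : Inj _ _ (rinv R)) by (apply Inj_inv; auto).
  assert (Dt : forall y, dom (rinv R) y) by (intros y; apply RR; auto).
  assert (Rt : forall x, ran (rinv R) x) by (intros x; apply DR; auto).
  exists (iso_of_rel _ _ (rinv R) It Dt Rt). intros a.
  pose proof (iso_of_rel_spec _ _ (rinv R) It Dt Rt (Sf t a)) as H.
  destruct IR as [_ [iR _]]. apply (iR _ _ (Sf t a)); auto.
Qed.

End Main.

Theorem lemma4p2 (Gamma : digraph)
  (Hcount : countable_digraph Gamma)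
  (C1 : forall u : Gamma, isomorphic (induced Gamma (desc Gamma u)) Gamma)
  (C2 : forall X : Gamma -> Prop,
      desc_closed Gamma X -> fin_gen_set Gamma X ->
      ext_countable_index Gamma X)
  (A : digraph) (HA : in_C Gamma A) :
  exists S : nat -> {B : digraph & A -> B},
    forall (B : digraph) (f : A -> B),
      in_C Gamma B -> le_embedding A B f ->
      exists n, iso_embeddings A (projT1 (S n)) B (projT2 (S n)) f.
Proof.
  destruct Hcount as [cG cG_inj]. exact (main_sec Gamma cG cG_inj C2 A HA).
Qed.
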